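(* Let $p$ be a prime, and let $k,n,m,n_0,m_0$ be nonnegative integers such that $k\ge 1$ and $0\le n_0,m_0\le p-1$. If $p\ge 5$, then $$\binom{np^k+n_0}{mp^k+m_0}\equiv \binom{np^{\lfloor (k-1)/3\rfloor}}{mp^{\lfloor (k-1)/3\rfloor}}\binom{n_0}{m_0}\pmod{p^k}.$$ Furthermore, for $p=2$, $$\binom{n2^k+n_0}{m2^k+m_0}\equiv \binom{n2^{\lfloor k/2\rfloor}}{m2^{\lfloor k/2\rfloor}}\binom{n_0}{m_0}\pmod{2^k},$$ and for $p=3$, $$\binom{n3^k+n_0}{m3^k+m_0}\equiv \binom{n3^{\lfloor (k-1)/2\rfloor}}{m3^{\lfloor (k-1)/2\rfloor}}\binom{n_0}{m_0}\pmod{3^k}.$$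
   Context: $\lfloor a\rfloor$ denotes the greatest integer less than or equal to $a$. Binomial coefficients use the conventions $\binom{0}{0}=1$ and $\binom{l}{r}=0$ if $l<r$. *)

(* Defs.v *)
From mathcomp Require Import all_boot.

(* Main.v *)
Require Import Defs.
From mathcomp Require Import all_boot.
From mathcomp Require Import zify ring.

Lemma mod_cancel a b u q : a * u = b * u %[mod q] -> coprime u q -> a = b %[mod q].
Proof.
move=> H cu; wlog le : a b H / a <= b.
  move=> W; case: (leqP a b) => h; first exact: W.
  by apply/esym/W => //; exact: ltnW.
apply/eqP; rewrite eq_sym eqn_mod_dvd //.
have : q %| b * u - a * u by rewrite -eqn_mod_dvd ?leq_mul2r ?le ?orbT // eq_sym; apply/eqP.
by rewrite -mulnBl Gauss_dvdl // coprime_sym.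
Qed.

Lemma mod_weak a b d q : a = b %[mod q] -> d %| q -> a = b %[mod d].
Proof. by move=> H dq; rewrite -(modn_dvdm a dq) H modn_dvdm. Qed.

Lemma sum_mod (I : Type) (r : seq I) (P : pred I) (F G : I -> nat) d :
  (forall i, P i -> F i = G i %[mod d]) ->
  \sum_(i <- r | P i) F i = \sum_(i <- r | P i) G i %[mod d].
Proof.
move=> H; apply: (big_ind2 (fun x y => x = y %[mod d])) => //.
by move=> x1 x2 y1 y2 e1 e2; rewrite -modnDm e1 e2 modnDm.
Qed.

Lemma prod_mod (I : Type) (r : seq I) (P : pred I) (F G : I -> nat) d :
  (forall i, P i -> F i = G i %[mod d]) ->
  \prod_(i <- r | P i) F i = \prod_(i <- r | P i) G i %[mod d].
Proof.
move=> H; apply: (big_ind2 (fun x y => x = y %[mod d])) => //.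
by move=> x1 x2 y1 y2 e1 e2; rewrite -modnMm e1 e2 modnMm.
Qed.

Lemma notdvd_prod (I : Type) (r : seq I) (P : pred I) (F : I -> nat) p :
  prime p -> (forall i, P i -> ~~ (p %| F i)) -> ~~ (p %| \prod_(i <- r | P i) F i).
Proof.
move=> pp H; apply: (big_ind (fun x => ~~ (p %| x))) => //.
  by rewrite dvdn1; case: eqP pp => // ->.
by move=> x y hx hy; rewrite Euclid_dvdM // negb_or hx.
Qed.

Lemma coprime_pow_of p x e : prime p -> ~~ (p %| x) -> coprime x (p ^ e).
Proof.
move=> pp h; case: e => [|e]; first by rewrite expn0 coprimen1.
by rewrite coprime_pexpr // coprime_sym prime_coprime.
Qed.

Lemma first_order_seq (I : eqType) (s : seq I) (c : I -> nat) z : uniq s ->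
  exists W, \prod_(i <- s) (c i + z) =
    \prod_(i <- s) c i + z * \sum_(i <- s) \prod_(j <- s | j != i) c j + z ^ 2 * W.
Proof.
elim: s => [|x s IH] /=.
  by move=> _; exists 0; rewrite !big_nil; ring.
case/andP=> xs us; have [W HW] := IH us.
have E1 : \prod_(j <- s | j != x) c j = \prod_(j <- s) c j.
  rewrite big_seq_cond [RHS]big_seq_cond; apply: eq_bigl => j.
  by case: (boolP (j \in s)) => //= js; case: eqP js xs => // -> ->.
have E2 : \sum_(i <- s) \prod_(j <- x :: s | j != i) c j =
          c x * \sum_(i <- s) \prod_(j <- s | j != i) c j.
  rewrite big_distrr /= big_seq [RHS]big_seq; apply: eq_bigr => i iS.
  rewrite big_cons; case: eqP => [ei|//]; by rewrite ei iS in xs.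
exists (c x * W + \sum_(i <- s) \prod_(j <- s | j != i) c j + z * W).
rewrite !big_cons eqxx /= E1 E2 HW; ring.
Qed.

Definition Q x L := \prod_(i < L) (x + i.+1).
Definition V p x L := \prod_(i < L | ~~ (p %| i.+1)) (x + i.+1).
Definition U p x L := \prod_(i < L | ~~ (p %| i)) (x + i).

Lemma Qfact x L : (x + L)`! = x`! * Q x L.
Proof.
elim: L => [|L IH]; first by rewrite /Q big_ord0 addn0 muln1.
by rewrite /Q big_ord_recr /= -/(Q x L) addnS factS IH; ring.
Qed.

Lemma Qbin x L : 'C(x + L, L) * L`! = Q x L.
Proof.
have := bin_fact (leq_addl x L); rewrite addnK Qfact mulnA => /eqP.
by rewrite mulnC eqn_pmul2l ?fact_gt0 // => /eqP.
Qed.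

Lemma Qsplit x L K : Q x (L + K) = Q x L * Q (x + L) K.
Proof.
rewrite /Q big_split_ord /=; congr (_ * _); apply: eq_bigr => i _ /=; lia.
Qed.

Lemma Vsplit p x L K : p %| L -> V p x (L + K) = V p x L * V p (x + L) K.
Proof.
move=> pL; rewrite /V big_split_ord /=; congr (_ * _).
apply: eq_big => [i|i _] /=; last lia.
by rewrite -addnS dvdn_addr.
Qed.

Lemma QV p D K : 0 < p -> Q (p * D) (p * K) = p ^ K * Q D K * V p (p * D) (p * K).
Proof.
case: p => // p' _; set p := p'.+1.
have blk S : Q (p * S) p = p * S.+1 * V p (p * S) p.
  rewrite /Q /V big_ord_recr /= [in RHS]big_mkcond big_ord_recr /= dvdnn /= muln1.
  rewrite -big_mkcond /=.
  rewrite [in RHS](eq_bigl xpredT) => [|i]; last first.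
    rewrite /=; apply/negP => H; have := dvdn_leq (ltn0Sn _) H.
    by rewrite /p ltnS leqNgt ltn_ord.
  rewrite mulnC /p mulnS; lia.
elim: K => [|K IH]; first by rewrite /Q /V !muln0 !big_ord0.
rewrite mulnS addnC Qsplit Vsplit ?dvdn_mulr // IH -mulnDr blk.
rewrite /Q big_ord_recr /= -/(Q D K) expnS; by rewrite /p addnS; ring.
Qed.

Lemma binV p D M : 0 < p ->
  'C(p * (D + M), p * M) * V p 0 (p * M) = 'C(D + M, M) * V p (p * D) (p * M).
Proof.
move=> p0.
have h1 := Qbin (p * D) (p * M); rewrite QV // -mulnDr -(Qbin D M) in h1.
have h2 := Qfact 0 (p * M); rewrite add0n fact0 mul1n -(muln0 p) QV // muln0 in h2.
have h3 := Qfact 0 M; rewrite add0n fact0 mul1n in h3.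
rewrite -h3 in h2; rewrite h2 in h1.
apply/eqP; rewrite -(@eqn_pmul2l (p ^ M * M`!)) ?muln_gt0 ?expn_gt0 ?p0 ?fact_gt0 //.
apply/eqP.
have -> : p ^ M * M`! * ('C(p * (D + M), p * M) * V p 0 (p * M)) =
  'C(p * (D + M), p * M) * (p ^ M * M`! * V p 0 (p * M)) by ring.
rewrite h1; ring.
Qed.

Lemma Vblocks p x P m : p %| P -> V p x (m * P) = \prod_(b < m) V p (x + b * P) P.
Proof.
move=> pP; elim: m => [|m IH]; first by rewrite mul0n /V !big_ord0.
by rewrite mulSn addnC Vsplit ?dvdn_mull // IH big_ord_recr.
Qed.

Lemma VU p y P : p %| P -> V p y P = U p y P.
Proof.
move=> pP; rewrite /V /U.
have e1 : \prod_(i < P.+1 | ~~ (p %| i)) (y + i) = \prod_(i < P | ~~ (p %| i.+1)) (y + i.+1).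
  by rewrite big_mkcond big_ord_recl /= dvdn0 /= mul1n -big_mkcond.
have e2 : \prod_(i < P.+1 | ~~ (p %| i)) (y + i) = \prod_(i < P | ~~ (p %| i)) (y + i).
  by rewrite big_mkcond big_ord_recr /= pP /= muln1 -big_mkcond.
by rewrite -e1 e2.
Qed.


Lemma dvd_modP d m n : d %| m -> (d %| n %% m) = (d %| n).
Proof. by move=> dm; rewrite [in RHS](divn_eq n m) dvdn_addr // dvdn_mull. Qed.

Lemma first_order (I : finType) (A : {pred I}) (c : I -> nat) z :
  exists W, \prod_(i in A) (c i + z) =
    \prod_(i in A) c i + z * \sum_(i in A) \prod_(j in A | j != i) c j + z ^ 2 * W.
Proof.
have [W HW] := @first_order_seq _ _ c z (enum_uniq A).
exists W; rewrite -!big_enum HW; congr (_ + z * _ + _).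
by apply: eq_bigr => i _; rewrite big_enum_cond.
Qed.

Lemma gsq p P y : p %| P -> 0 < P ->
  (U p y P) ^ 2 = \prod_(i in [pred i : 'I_P | ~~ (p %| i)]) (i * (P - i) + y * (y + P)).
Proof.
move=> pP P0; set A := [pred i : 'I_P | ~~ (p %| i)].
pose h (i : 'I_P) : 'I_P := Ordinal (ltn_pmod (P - i) P0).
have hh : cancel h h.
  move=> i; apply: val_inj => /=.
  case: (posnP i) => [->|ip]; first by rewrite subn0 modnn subn0 modnn.
  rewrite (modn_small (m := P - i)); last by rewrite ltn_subrL ip.
  by rewrite subKn ?modn_small // ltnW.
have hinj : injective h := can_inj hh.
have U2 : U p y P = \prod_(i in A) (y + i) by apply: eq_bigl.
rewrite expnS expn1 {1}U2 U2 [in X in _ * X = _](reindex_inj hinj) /=.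
rewrite [in X in _ * X = _](eq_bigl A) => [|i]; last first.
  rewrite !inE /=; case: (posnP i) => [->|ip]; first by rewrite subn0 modnn dvdn0.
  rewrite modn_small ?ltn_subrL ?ip // dvdn_subr // ltnW //.
rewrite -big_split /=; apply: eq_bigr => i; rewrite inE /= => ndv.
have ip : 0 < i by case: (posnP i) ndv => // ->; rewrite dvdn0.
rewrite modn_small ?ltn_subrL ?ip //.
have le : (i : nat) <= P by apply: ltnW.
move: (i : nat) le => a le.
have -> : y + P = y + (P - a) + a by lia.
ring.
Qed.

Lemma coprime_small p q : prime p -> 0 < q < p -> coprime q p.
Proof.
move=> pp /andP[q0 qp]; rewrite coprime_sym prime_coprime //.
by apply/negP => /(dvdn_leq q0); rewrite leqNgt qp.
Qed.

Lemma T5 p r P : prime p -> 5 <= p -> 0 < r -> P = p ^ r ->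
  P %| \sum_(i in [pred i : 'I_P | ~~ (p %| i)])
         \prod_(j in [pred i : 'I_P | ~~ (p %| i)] | j != i) (j * (P - j)).
Proof.
move=> pp p5 r0 eP.
have P0 : 0 < P by rewrite eP expn_gt0 prime_gt0.
have cop x : ~~ (p %| x) -> coprime x P by move=> H; rewrite eP; exact: coprime_pow_of.
have c2 : coprime 2 P by apply: cop; apply/negP => /(dvdn_leq (isT : 0 < 2)); lia.
have c3 : coprime 3 P by apply: cop; apply/negP => /(dvdn_leq (isT : 0 < 3)); lia.
have n2 : ~~ (p %| 2) by apply/negP => /(dvdn_leq (isT : 0 < 2)); lia.
have pdP : p %| P by rewrite eP -(prednK r0) expnS dvdn_mulr.
set A := [pred i : 'I_P | ~~ (p %| i)].
have pP : forall x : 'I_P, x \in A -> coprime x P by move=> x; rewrite inE /= => H; apply: cop.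
pose h (i : 'I_P) : 'I_P := Ordinal (ltn_pmod (2 * i) P0).
have hinj : injective h.
  move=> i j /(congr1 val) /= e; apply: val_inj.
  have : (i : nat) = j %[mod P] by apply: (@mod_cancel _ _ 2); rewrite // ![_ * 2]mulnC.
  by rewrite !modn_small.
have hA : forall i, (h i \in A) = (i \in A).
  by move=> i; rewrite !inE /= dvd_modP // Euclid_dvdM // (negbTE n2).
have hv : forall i, (h i : nat) = 2 * i %[mod P] by move=> i; rewrite /= modn_mod.
have hc : forall j : 'I_P, h j * (P - h j) = 4 * (j * (P - j)) %[mod P].
  move=> j.
  have lk : (h j : nat) <= P by apply: ltnW.
  have lj : (j : nat) <= P by apply: ltnW.
  have e1 : h j * (P - h j) + h j * h j = h j * P by rewrite -mulnDr subnK.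
  have e2 : 4 * (j * (P - j)) + 4 * (j * j) = (4 * j) * P by rewrite -mulnDr -mulnDr subnK // mulnA.
  have e3 : h j * h j = 4 * (j * j) %[mod P].
    by rewrite -modnMm hv modnMm; congr (_ %% _); ring.
  apply/eqP; rewrite -(eqn_modDr (h j * h j)) e1 -modnDmr e3 modnDmr e2.
  by rewrite !modnMl.
have G1 : \prod_(i in A) 2 = 1 %[mod P].
  set G := \prod_(i in A) (i : nat).
  have cG : coprime G P.
    by apply: (big_ind (fun x => coprime x P)) => // [|x y cx cy]; rewrite ?coprime1n // coprimeMl cx.
  apply: (@mod_cancel _ _ G) => //; rewrite mul1n.
  have e : \prod_(i in A) (h i : nat) = G.
    by rewrite /G [RHS](reindex_inj hinj) /=; apply: eq_bigl => i; rewrite hA.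
  have e' : \prod_(i in A) (h i : nat) = \prod_(i in A) 2 * G %[mod P].
    by rewrite (@prod_mod _ _ _ _ (fun i : 'I_P => 2 * i)) ?big_split // => i _; apply: hv.
  by rewrite -e' e.
set T := \sum_(i in A) _.
have s1 : T = \sum_(i in A) \prod_(j in A | j != i) (h j * (P - h j)).
  rewrite /T (reindex_inj hinj) /=; apply: eq_big => [i|i _]; first by rewrite hA.
  rewrite (reindex_inj hinj) /=; apply: eq_bigl => j; by rewrite hA (inj_eq hinj).
have s2 : T = \sum_(i in A) \prod_(j in A | j != i) (4 * (j * (P - j))) %[mod P].
  by rewrite s1; apply: sum_mod => i _; apply: prod_mod => j _; apply: hc.
have s3 : 4 * T = \prod_(j in A) 4 * T %[mod P].
  rewrite -modnMmr s2 modnMmr big_distrr /T big_distrr /=.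
  congr (_ %% _); apply: eq_bigr => i iA.
  by rewrite big_split /= (bigD1 i iA) /= mulnA.
have s4 : 4 * T = T %[mod P].
  have G2 : \prod_(i in A) 2 * \prod_(i in A) 2 = 1 %[mod P] by rewrite -modnMm G1 modnMm.
  by rewrite s3 -modnMml (_ : 4 = 2 * 2) // big_split /= G2 modnMml mul1n.
have : P %| 3 * T.
  have -> : 3 * T = 4 * T - T by rewrite mulSn addKn.
  by rewrite -eqn_mod_dvd ?leq_pmull //; apply/eqP.
by rewrite Gauss_dvdr // coprime_sym.
Qed.

Lemma Umod p y P : P %| y -> U p y P = U p 0 P %[mod P].
Proof.
move=> Py; apply: prod_mod => i _.
by rewrite add0n -modnDml (eqP (_ : y %% P == 0)) ?add0n // -dvdn_eq0 Py.
Qed.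

Lemma Uge p y P : U p 0 P <= U p y P.
Proof. by apply: leq_prod => i _; rewrite add0n leq_addl. Qed.

Lemma sqdiff p y P : p %| P -> 0 < P -> exists W,
  U p y P ^ 2 = U p 0 P ^ 2 + y * (y + P) *
   (\sum_(i in [pred i : 'I_P | ~~ (p %| i)])
         \prod_(j in [pred i : 'I_P | ~~ (p %| i)] | j != i) (j * (P - j)) + y * (y + P) * W).
Proof.
move=> pP P0; rewrite !gsq //.
have [W HW] := first_order _ [pred i : 'I_P | ~~ (p %| i)] (fun i : 'I_P => i * (P - i)) (y * (y + P)).
exists W; rewrite HW.
have E0 : \prod_(i in [pred i : 'I_P | ~~ (p %| i)]) (i * (P - i) + 0 * (0 + P)) =
  \prod_(i in [pred i : 'I_P | ~~ (p %| i)]) (i * (P - i)).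
  by apply: eq_bigr => i _; rewrite mul0n addn0.
rewrite E0.
ring.
Qed.

Lemma Gnd p P : prime p -> ~~ (p %| U p 0 P).
Proof. by move=> pp; apply: notdvd_prod => // i; rewrite add0n. Qed.

Lemma oddkey p r y e : prime p -> 2 < p -> 0 < r -> p ^ r %| y ->
  (p ^ r) ^ e %| U p y (p ^ r) ^ 2 - U p 0 (p ^ r) ^ 2 ->
  U p y (p ^ r) = U p 0 (p ^ r) %[mod (p ^ r) ^ e].
Proof.
move=> pp p2 r0 Py; set g := U p y _; set G := U p 0 _.
have pP : p %| p ^ r by rewrite -(prednK r0) expnS dvdn_mulr.
have gG : g = G %[mod p] by exact: (mod_weak _ _ _ _ (Umod _ _ _ Py) pP).
have ndv : ~~ (p %| g + G).
  rewrite -(dvd_modP _ _ _ (dvdnn p)) -modnDml gG modnDml (dvd_modP _ _ _ (dvdnn p)).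
  rewrite addnn -mul2n Euclid_dvdM // negb_or Gnd // andbT.
  by apply/negP => /(dvdn_leq (isT : 0 < 2)); rewrite leqNgt p2.
rewrite subn_sqr Gauss_dvdl; last by rewrite coprime_sym -expnM coprime_pow_of.
by move=> H; apply/eqP; rewrite eqn_mod_dvd // Uge.
Qed.

Lemma zdiv p r y : p ^ r %| y -> (p ^ r) ^ 2 %| y * (y + p ^ r).
Proof.
case/dvdnP=> t ->.
have -> : t * p ^ r * (t * p ^ r + p ^ r) = (p ^ r) ^ 2 * (t * (t + 1)) by ring.
exact: dvdn_mulr.
Qed.

Lemma key5 p r y : prime p -> 5 <= p -> 0 < r -> p ^ r %| y ->
  U p y (p ^ r) = U p 0 (p ^ r) %[mod p ^ (3 * r)].
Proof.
move=> pp p5 r0 Py.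
have pP : p %| p ^ r by rewrite -(prednK r0) expnS dvdn_mulr.
have P0 : 0 < p ^ r by rewrite expn_gt0 prime_gt0.
rewrite mulnC expnM; apply: oddkey => //; first by apply: leq_trans p5.
have [W ->] := sqdiff _ y _ pP P0; rewrite addKn.
rewrite (_ : 3 = 2 + 1) // expnD expn1 dvdn_mul ?zdiv //.
by rewrite dvdn_add ?(T5 _ _ _ pp p5 r0 (erefl _)) // !dvdn_mulr.
Qed.

Lemma key3 r y : 0 < r -> 3 ^ r %| y ->
  U 3 y (3 ^ r) = U 3 0 (3 ^ r) %[mod 3 ^ (2 * r)].
Proof.
move=> r0 Py.
have pP : 3 %| 3 ^ r by rewrite -(prednK r0) expnS dvdn_mulr.
have P0 : 0 < 3 ^ r by rewrite expn_gt0.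
rewrite mulnC expnM; apply: oddkey => //.
have [W ->] := sqdiff _ y _ pP P0; rewrite addKn.
by rewrite dvdn_mulr // zdiv.
Qed.

Lemma key2 r y : 0 < r -> 2 ^ r %| y ->
  U 2 y (2 ^ r) = U 2 0 (2 ^ r) %[mod 2 ^ (2 * r).-1].
Proof.
move=> r0 Py; case: (ltngtP r 1) => [|r1|r1]; first by rewrite ltnNge r0.
  have pP : 2 %| 2 ^ r by rewrite -(prednK r0) expnS dvdn_mulr.
  have P0 : 0 < 2 ^ r by rewrite expn_gt0.
  set g := U 2 y _; set G := U 2 0 _.
  have H : (2 ^ r) ^ 2 %| g ^ 2 - G ^ 2.
    by have [W ->] := sqdiff _ y _ pP P0; rewrite addKn dvdn_mulr // zdiv.
  have d4 : 4 %| 2 ^ r by rewrite -(subnK r1) expnD dvdn_mull.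
  have gG : g = G %[mod 4] by exact: (mod_weak _ _ _ _ (Umod _ _ _ Py) d4).
  have Godd : odd G by have := Gnd 2 (2 ^ r) (isT : prime 2); rewrite dvdn2 negbK.
  have m2 : (g + G) %% 4 = 2.
    rewrite -modnDml gG modnDml.
    have e : G %% 2 = 1 by rewrite modn2 Godd.
    rewrite (divn_eq G 2) e; set q := G %/ 2.
    have -> : q * 2 + 1 + (q * 2 + 1) = q * 4 + 2 by ring.
    by rewrite modnMDl.
  have hw : g + G = 2 * ((g + G) %/ 4 * 2 + 1).
    by rewrite {1}(divn_eq (g + G) 4) m2; ring.
  move: H; rewrite subn_sqr hw mulnCA -expnM.
  rewrite -(prednK (_ : 0 < r * 2)) ?muln_gt0 ?r0 // expnS dvdn_pmul2l // Gauss_dvdl.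
    by rewrite mulnC => H; apply/eqP; rewrite eqn_mod_dvd // Uge.
  by rewrite coprime_sym coprime_pow_of // dvdn2 negbK oddD oddM andbF.
by rewrite r1 /= expn1 in Py *; apply: Umod.
Qed.

Lemma step p r n m e : prime p -> 0 < r ->
  (forall y, p ^ r %| y -> U p y (p ^ r) = U p 0 (p ^ r) %[mod p ^ e]) ->
  'C(n * p ^ r, m * p ^ r) = 'C(n * p ^ (r - 1), m * p ^ (r - 1)) %[mod p ^ e].
Proof.
move=> pp r0 key.
have p0 : 0 < p by apply: prime_gt0.
case: (leqP m n) => mn; last first.
  by rewrite !bin_small // ltn_pmul2r // expn_gt0 p0.
set P' := p ^ (r - 1).
have eP : p ^ r = p * P' by rewrite /P' -expnS subn1 prednK.
have pP : p %| p ^ r by rewrite eP dvdn_mulr.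
have e1 : n * p ^ r = p * ((n - m) * P' + m * P') by rewrite -mulnDl subnK // eP; ring.
have e2 : m * p ^ r = p * (m * P') by rewrite eP; ring.
have e3 : n * P' = (n - m) * P' + m * P' by rewrite -mulnDl subnK.
have bv := binV p ((n - m) * P') (m * P') p0.
rewrite e1 e2 e3.
have cV : coprime (V p 0 (p * (m * P'))) (p ^ e).
  by apply: coprime_pow_of => //; apply: notdvd_prod => // i; rewrite add0n.
apply: (mod_cancel _ _ _ _ _ cV); rewrite bv.
have Vc : forall x, p ^ r %| x ->
    V p x (p * (m * P')) = \prod_(b < m) U p 0 (p ^ r) %[mod p ^ e].
  move=> x Px; rewrite mulnCA -eP Vblocks //.
  apply: prod_mod => b _; rewrite VU //; apply: key.
  by rewrite dvdn_add // dvdn_mull.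
rewrite -modnMmr Vc; last by rewrite mulnCA -eP dvdn_mull.
by rewrite -(Vc 0) ?dvdn0 // modnMmr.
Qed.

Lemma chain p n m j K :
  (forall r, j < r -> 'C(n * p ^ r, m * p ^ r) = 'C(n * p ^ (r - 1), m * p ^ (r - 1)) %[mod p ^ K]) ->
  forall d, 'C(n * p ^ (j + d), m * p ^ (j + d)) = 'C(n * p ^ j, m * p ^ j) %[mod p ^ K].
Proof.
move=> Hs; elim=> [|d IH]; first by rewrite addn0.
by rewrite Hs ?addnS ?ltnS ?leq_addr // subn1 /= IH.
Qed.

Lemma binL p k A M : prime p -> p ^ k %| A -> ~~ (p %| M) -> p ^ k %| 'C(A, M).
Proof.
move=> pp pA; case: M => [|M] nd; first by rewrite dvdn0 in nd.
have : p ^ k %| M.+1 * 'C(A, M.+1) by rewrite -mul_bin_diag dvdn_mulr.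
by rewrite Gauss_dvdr // coprime_sym coprime_pow_of.
Qed.

Lemma VdM p k n m n0 m0 : prime p -> n0 < p -> m0 < p ->
  'C(n * p ^ k + n0, m * p ^ k + m0) = 'C(n * p ^ k, m * p ^ k) * 'C(n0, m0) %[mod p ^ k].
Proof.
move=> pp n0p m0p; case: k => [|k]; first by rewrite expn0 !modn1.
set A := n * _; set B := m * _.
have pB : p %| B by rewrite /B expnS mulnCA dvdn_mulr.
rewrite [A + n0]addnC -Vandermonde (bigD1 (@Ordinal (B + m0).+1 m0 (leq_addl B m0))) //= addnK.
set R := \sum_(i | _) _.
have HR : R %% p ^ k.+1 = 0.
  apply/eqP; rewrite -/(p ^ k.+1 %| R); apply: dvdn_sum => j /eqP ne.
  case: (ltnP n0 j) => jn; first by rewrite bin_small.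
  apply: dvdn_mull; apply: binL => //; first by rewrite dvdn_mull.
  have jB : (j : nat) <= B + m0 by rewrite -ltnS ltn_ord.
  have jm : (j : nat) != m0 by apply/eqP => e; apply: ne; apply: val_inj.
  apply/negP => pM.
  case: (leqP (j : nat) m0) => jm0.
    move: pM; rewrite -addnBA // dvdn_addr // => /(dvdn_leq _) H.
    have : p <= m0 - j by apply: H; rewrite subn_gt0 ltn_neqAle jm.
    lia.
  have eB : B = (B + m0 - j) + (j - m0) by lia.
  move: pB; rewrite eB dvdn_addr // => /(dvdn_leq _) H.
  have : p <= j - m0 by apply: H; rewrite subn_gt0.
  lia.
by rewrite -modnDmr HR addn0 mulnC.
Qed.

Lemma fin p k n m n0 m0 j (e : nat -> nat) : prime p -> j <= k -> n0 < p -> m0 < p ->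
  (forall r, j < r -> k <= e r) ->
  (forall r y, 0 < r -> p ^ r %| y -> U p y (p ^ r) = U p 0 (p ^ r) %[mod p ^ e r]) ->
  'C(n * p ^ k + n0, m * p ^ k + m0) = 'C(n * p ^ j, m * p ^ j) * 'C(n0, m0) %[mod p ^ k].
Proof.
move=> pp jk n0p m0p He key.
rewrite VdM // -modnMml -(subnKC jk) chain ?modnMml // => r jr.
have r0 : 0 < r by apply: leq_ltn_trans jr.
apply: (mod_weak _ _ _ _ (step p r n m (e r) pp r0 (fun y => key r y r0))).
by rewrite subnKC //; apply: dvdn_exp2l; apply: He.
Qed.

Theorem mainTheorem1 (p k n m n0 m0 : nat) :
  prime p -> 1 <= k -> n0 <= p - 1 -> m0 <= p - 1 ->
  [/\ (5 <= p ->
        'C(n * p ^ k + n0, m * p ^ k + m0)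
        = 'C(n * p ^ ((k - 1) %/ 3), m * p ^ ((k - 1) %/ 3)) * 'C(n0, m0)
          %[mod p ^ k]),
      (p = 2 ->
        'C(n * 2 ^ k + n0, m * 2 ^ k + m0)
        = 'C(n * 2 ^ (k %/ 2), m * 2 ^ (k %/ 2)) * 'C(n0, m0) %[mod 2 ^ k])
    & (p = 3 ->
        'C(n * 3 ^ k + n0, m * 3 ^ k + m0)
        = 'C(n * 3 ^ ((k - 1) %/ 2), m * 3 ^ ((k - 1) %/ 2)) * 'C(n0, m0)
          %[mod 3 ^ k])].
Proof.
move=> pp k1 hn0 hm0.
have p0 : 0 < p by apply: prime_gt0.
have n0p : n0 < p by lia.
have m0p : m0 < p by lia.
split=> [p5|p2|p3].
- apply: (@fin p k n m n0 m0 ((k - 1) %/ 3) (fun r => 3 * r)) => //; first by lia.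
    by move=> r jr; lia.
  by move=> r y r0 Py; apply: key5.
- subst p; apply: (@fin 2 k n m n0 m0 (k %/ 2) (fun r => (2 * r).-1)) => //; first by lia.
    by move=> r jr; lia.
  by move=> r y r0 Py; apply: key2.
- subst p; apply: (@fin 3 k n m n0 m0 ((k - 1) %/ 2) (fun r => 2 * r)) => //; first by lia.
    by move=> r jr; lia.
  by move=> r y r0 Py; apply: key3.
Qed.
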